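(* For every $n \geq 2$ and every $i \in \{2,\ldots,n\}$, the number of deranged linear arrangements of $\{1,\ldots,n\}$ whose first entry is $i$ is exactly $d_{n-1}$ (and there are none with first entry $1$).
   Context: A linear arrangement of $\{1,\ldots,n\}$ is a sequence $a_1\cdots a_n$ in which each of $1,\ldots,n$ appears exactly once; it is deranged if $a_t\ne t$ for all $t$. It contains the pattern $ij$ if $a_t=i$ and $a_{t+1}=j$ for some $t$; otherwise it avoids it. $d_m$ is the number of linear arrangements of $\{1,\ldots,m\}$ avoiding all of the patterns $12, 23, \ldots, (m-1)m$. *)

(* Defs.v *)
From mathcomp Require Import all_boot.
Set Implicit Arguments. Unset Strict Implicit. Unset Printing Implicit Defensive.

(* Linear arrangements of {1,...,m} are sequences s with perm_eq s (iota 1 m).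
   The library's [permutations (iota 1 m)] lists each of them exactly once
   (lemmas permutations_uniq, mem_permutations), so counting over it counts
   arrangements. Positions are 1-based in the paper: a_t = nth 0 s (t-1). *)

Definition arrangements (m : nat) : seq (seq nat) := permutations (iota 1 m).

Definition contains_pattern (s : seq nat) (i j : nat) : bool :=
  has (fun t => (nth 0 s t == i) && (nth 0 s t.+1 == j)) (iota 0 (size s).-1).

Definition deranged (s : seq nat) : bool :=
  all (fun t => nth 0 s t != t.+1) (iota 0 (size s)).

Definition avoids_successions (m : nat) (s : seq nat) : bool :=
  all (fun k => ~~ contains_pattern s k k.+1) (iota 1 m.-1).

Definition d (m : nat) : nat := count (avoids_successions m) (arrangements m).

(* Main.v *)
Require Import Defs.
From mathcomp Require Import all_boot.
From mathcomp Require Import zify.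

Lemma perm_self {f : nat -> nat} {l} : uniq l -> {in l, forall x, f x \in l} ->
  {in l &, injective f} -> perm_eq (map f l) l.
Proof.
move=> ul sub inj.
have um : uniq (map f l) by rewrite map_inj_in_uniq.
have sub' : {subset map f l <= l} by move=> y /mapP [x xl ->]; exact: sub.
have [_ E] := uniq_min_size um sub' (eq_leq (esym (size_map f _))).
exact: uniq_perm.
Qed.

Lemma count_bij (f : seq nat -> seq nat) (s : seq (seq nat)) (P : pred (seq nat)) :
  uniq s -> {in s, forall x, f x \in s} -> {in s &, injective f} ->
  count P s = count (fun x => P (f x)) s.
Proof.
move=> us sub inj.
have um : uniq (map f s) by rewrite map_inj_in_uniq.
have sub' : {subset map f s <= s} by move=> y /mapP [x xl ->]; exact: sub.
have [_ E] := uniq_min_size um sub' (eq_leq (esym (size_map f _))).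
have /permP pe := uniq_perm um us E.
by rewrite -pe count_map.
Qed.

Definition minl (l : seq nat) := foldr minn (head 0 l) l.

Lemma foldr_minn_le x l : foldr minn x l <= x /\ forall y, y \in l -> foldr minn x l <= y.
Proof.
elim: l => [|a l [IH1 IH2]] /=; first by split.
split; first by lia.
move=> y; rewrite inE => /orP [/eqP ->|yl]; first lia.
have := IH2 y yl; lia.
Qed.

Lemma foldr_minn_mem x l : foldr minn x l \in x :: l.
Proof.
elim: l => [|a l IH] /=; first by rewrite inE.
rewrite /minn; case: ifP => _; rewrite !inE ?eqxx ?orbT //.
move: IH; rewrite !inE => /orP [->|->]; by rewrite ?orbT.
Qed.

Lemma minl_le l y : y \in l -> minl l <= y.
Proof. by move=> yl; have [_ H] := foldr_minn_le (head 0 l) l; exact: H. Qed.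

Lemma minl_mem l : l != [::] -> minl l \in l.
Proof.
case: l => [//|a l] _; rewrite /minl /=.
have := foldr_minn_mem a (a :: l); rewrite /= inE => /orP [/eqP ->|//].
by rewrite inE eqxx.
Qed.

Lemma minl_eq (l l' : seq nat) : l =i l' -> l != [::] -> minl l = minl l'.
Proof.
move=> E ne.
have ne' : l' != [::].
  by case: l' E => [|//] E; case: l ne E => [//|a l] _ /(_ a); rewrite inE eqxx.
apply/eqP; rewrite eqn_leq; apply/andP; split; apply: minl_le.
  by rewrite E minl_mem.
by rewrite -E minl_mem.
Qed.

Definition g (w : seq nat) (s : nat) := maxn (nth 0 w s.+1) (minl (take s.+1 w)).
Definition gam (w : seq nat) (x : nat) := g w (index x w).
Definition G (m : nat) (w : seq nat) := map (gam w) (iota 1 m).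

Lemma nth_in_take (w : seq nat) s t : s <= t -> s < size w -> nth 0 w s \in take t.+1 w.
Proof.
move=> st sw; rewrite -(nth_take 0 (_ : s < t.+1)) //; apply: mem_nth.
rewrite size_take; case: (ltnP t.+1 (size w)) => _ //.
Qed.

Lemma take_ne (w : seq nat) s : s < size w -> take s.+1 w != [::].
Proof. by case: w => [//|a w]. Qed.

Lemma mu_le (w : seq nat) s t : s <= t -> t < size w -> minl (take t.+1 w) <= nth 0 w s.
Proof. move=> st tw; apply: minl_le; apply: nth_in_take => //; lia. Qed.

Lemma mu_anti (w : seq nat) s t : s <= t -> t < size w -> minl (take t.+1 w) <= minl (take s.+1 w).
Proof.
move=> st tw; apply: minl_le.
have : minl (take s.+1 w) \in take s.+1 (take t.+1 w).
  by rewrite take_takel // minl_mem // take_ne //; lia.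
exact: mem_take.
Qed.

Lemma mu_in_take {w : seq nat} {s} : s < size w -> minl (take s.+1 w) \in take s.+1 w.
Proof. by move=> sw; rewrite minl_mem // take_ne. Qed.

Lemma g_mem (w : seq nat) s : s < size w -> g w s \in w.
Proof.
move=> sw; rewrite /g.
have mu := mem_take (mu_in_take sw).
case: (ltnP s.+1 (size w)) => h.
  rewrite /maxn; case: ifP => _ //; exact: mem_nth.
by rewrite nth_default // max0n.
Qed.

Lemma notin_take_drop {w : seq nat} {k x y} : uniq w -> x \in take k w -> y \in drop k w -> x != y.
Proof.
move=> uw xt yd; apply/eqP => exy; subst y.
move: uw; rewrite -(cat_take_drop k w) cat_uniq => /and3P [_ /hasP H _].
by apply: H; exists x.
Qed.

Lemma nth_in_drop (w : seq nat) (k j : nat) : k <= j -> j < size w -> nth 0 w j \in drop k w.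
Proof.
move=> kj jw; have -> : j = k + (j - k) by lia.
rewrite -nth_drop; apply: mem_nth; rewrite size_drop; apply: ltn_sub2r => //; exact: leq_ltn_trans kj jw.
Qed.

Lemma g_neq {w : seq nat} {s t} : uniq w -> s < t -> t < size w -> g w s != g w t.
Proof.
move=> uw st tw; rewrite /g.
set a := nth 0 w s.+1; set b := nth 0 w t.+1.
set ms := minl (take s.+1 w); set mt := minl (take t.+1 w).
have h1 : mt <= a by apply: mu_le; lia.
have h2 : mt <= ms by apply: mu_anti; lia.
have h3 : a != ms.
  rewrite eq_sym; apply: (notin_take_drop uw (mu_in_take _)); first lia.
  apply: nth_in_drop; lia.
have h4 : t.+1 < size w -> (b != ms) && (a != b).
  move=> t1; apply/andP; split.
    rewrite eq_sym; apply: (notin_take_drop uw (mu_in_take _)); first lia.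
    apply: nth_in_drop; lia.
  rewrite /a /b nth_uniq //; [by rewrite eqSS neq_ltn st | exact: leq_ltn_trans st tw].
have h5 : size w <= t.+1 -> b = 0 by move=> h; rewrite /b nth_default.
case: (ltnP t.+1 (size w)) => h.
  move: (h4 h) => /andP [/eqP h6 /eqP h7]; move/eqP: h3 => h3; lia.
move: (h5 h) => h6; move/eqP: h3 => h3; lia.
Qed.

Lemma g_inj {w : seq nat} {s t} : uniq w -> s < size w -> t < size w -> g w s = g w t -> s = t.
Proof.
move=> uw sw tw E; case: (ltngtP s t) => // h.
  by move: (g_neq uw h tw); rewrite E eqxx.
by move: (g_neq uw h sw); rewrite E eqxx.
Qed.

Lemma gam_mem (w : seq nat) x : x \in w -> gam w x \in w.
Proof. by move=> xw; apply: g_mem; rewrite index_mem. Qed.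

Lemma gam_inj {w : seq nat} : uniq w -> {in w &, injective (gam w)}.
Proof.
move=> uw x y xw yw E.
have := g_inj uw _ _ E; rewrite !index_mem => /(_ xw yw) I.
by rewrite -(nth_index 0 xw) -(nth_index 0 yw) I.
Qed.

Lemma G_perm m w : perm_eq w (iota 1 m) -> perm_eq (G m w) (iota 1 m).
Proof.
move=> pw; have uw : uniq w by rewrite (perm_uniq pw) iota_uniq.
have h1 : perm_eq (G m w) (map (gam w) w) by apply: perm_map; rewrite perm_sym.
exact: perm_trans h1 (perm_trans (perm_self uw (@gam_mem w) (gam_inj uw)) pw).
Qed.

Lemma rec_unique (w : seq nat) v : uniq w -> perm_eq w v -> {in w, gam w =1 gam v} -> w = v.
Proof.
move=> uw pwv H.
have uv : uniq v by rewrite -(perm_uniq pwv).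
have sz : size v = size w by rewrite (perm_size pwv).
set N := size w.
suff: forall k, k <= N -> drop (N - k) w = drop (N - k) v.
  by move/(_ N (leqnn N)); rewrite subnn !drop0.
elim=> [_|k IH kN]; first by rewrite subn0 !drop_oversize // sz.
have sN : N - k.+1 < N by lia.
have E1 : N - k = (N - k.+1).+1 by lia.
move: (IH (ltnW kN)); rewrite E1 => IH'.
set s := N - k.+1 in sN IH' *.
rewrite (drop_nth 0 sN) (drop_nth 0 (_ : s < size v)) ?sz // IH'.
congr (_ :: _).
have pA : perm_eq (take s.+1 w) (take s.+1 v).
  have : perm_eq (take s.+1 w ++ drop s.+1 w) (take s.+1 v ++ drop s.+1 v) by rewrite !cat_take_drop.
  by rewrite IH' perm_cat2r.
have mA : minl (take s.+1 w) = minl (take s.+1 v).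
  by apply: minl_eq; [exact: perm_mem | apply: take_ne].
have nA : nth 0 w s.+1 = nth 0 v s.+1.
  by rewrite -[s.+1]addn0 -!nth_drop IH'.
set x := nth 0 w s; set y := nth 0 v s.
have xw : x \in w by apply: mem_nth.
have yv : y \in v by apply: mem_nth; rewrite sz.
have yw : y \in w by rewrite (perm_mem pwv).
apply: (gam_inj uw x y xw yw).
rewrite (H y yw) /gam /x /y (index_uniq 0 sN uw) (index_uniq 0 _ uv) ?sz //.
by rewrite /g nA mA.
Qed.

Lemma G_inj m : {in arrangements m &, injective (G m)}.
Proof.
move=> w v; rewrite /arrangements !mem_permutations => pw pv E.
have uw : uniq w by rewrite (perm_uniq pw) iota_uniq.
apply: rec_unique => //; first by rewrite (perm_trans pw) // perm_sym.
move=> x xw; move/eq_in_map: E; apply; by rewrite -(perm_mem pw).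
Qed.

Lemma nth_G (m : nat) (w : seq nat) t : 1 <= t <= m -> nth 0 (m.+1 :: G m w) t = gam w t.
Proof.
case: t => [//|u] /andP [_ um] /=.
rewrite /G (nth_map 0) ?size_iota // nth_iota //.
Qed.

Lemma key m (w : seq nat) : 0 < m -> perm_eq w (iota 1 m) ->
  deranged (m.+1 :: G m w) = avoids_successions m w.
Proof.
move=> m0 pw.
have uw : uniq w by rewrite (perm_uniq pw) iota_uniq.
have sw : size w = m by rewrite (perm_size pw) size_iota.
have memw : forall x, (x \in w) = (1 <= x < 1 + m) by move=> x; rewrite (perm_mem pw) mem_iota.
rewrite /deranged /= /G size_map size_iota -/(G m w).
have -> : (m.+1 != 1) = true by case: m m0 {pw sw memw}.
rewrite /=; apply/idP/idP.
- move=> /allP H; apply/allP => k; rewrite mem_iota => /andP [k1 km].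
  apply/negP => /hasP [p]; rewrite mem_iota sw => /andP [_ pm] /andP [/eqP wp /eqP wp1].
  have kin : k \in iota 1 m by rewrite mem_iota; apply/andP; split => //; lia.
  have := H k kin; rewrite nth_G; last by apply/andP; split => //; lia.
  have ps : p < size w by rewrite sw; lia.
  rewrite /gam -wp (index_uniq 0 ps uw) /g wp1.
  have := mu_le w p p (leqnn p) ps; rewrite wp => h.
  apply/negP; rewrite negbK; apply/eqP; lia.
- move=> /allP H; apply/allP => t; rewrite mem_iota => /andP [t1 tm].
  rewrite nth_G; last by apply/andP; split => //; lia.
  apply/negP => /eqP E.
  have tw : t \in w by rewrite memw t1.
  set p := index t w.
  have ps : p < size w by rewrite index_mem.
  have wp : nth 0 w p = t by apply: nth_index.
  have h := mu_le w p p (leqnn p) ps; rewrite wp in h.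
  move: E; rewrite /gam -/p /g => E.
  have E2 : nth 0 w p.+1 = t.+1 by lia.
  have ps1 : p.+1 < size w.
    by case: (ltnP p.+1 (size w)) => // h'; move: E2; rewrite nth_default.
  have t1w : t.+1 \in w by rewrite -E2 mem_nth.
  move: t1w; rewrite memw => /andP [_ t1m].
  have := H t; rewrite mem_iota; move=> /(_ _) H'.
  have : ~~ contains_pattern w t t.+1 by apply: H'; apply/andP; split => //; lia.
  move/negP; apply; apply/hasP; exists p.
    by rewrite mem_iota sw; apply/andP; split => //; rewrite sw in ps1; lia.
  by rewrite wp E2 !eqxx.
Qed.

Lemma cons_count m (P : pred (seq nat)) :
  count (fun s => P s && (head 0 s == m.+1)) (arrangements m.+1) =
  count (fun b => P (m.+1 :: b)) (arrangements m).
Proof.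
rewrite (@eq_count _ _ (predI P (fun s => head 0 s == m.+1))) // -count_filter.
have pe : perm_eq [seq s <- arrangements m.+1 | head 0 s == m.+1]
                  (map (cons m.+1) (arrangements m)).
  apply: uniq_perm.
  - by rewrite filter_uniq // permutations_uniq.
  - by rewrite map_inj_uniq ?permutations_uniq // => x y [].
  have eI : perm_eq (iota 1 m.+1) (m.+1 :: iota 1 m).
    have -> : iota 1 m.+1 = rcons (iota 1 m) m.+1 by rewrite -cats1 -(addn1 m) iotaD /= addnC.
    by rewrite perm_rcons.
  move=> s; rewrite mem_filter /arrangements mem_permutations (permPr eI).
  apply/idP/idP.
  - case: s => [|x b] /andP [/eqP hs ps] //=.
    rewrite /= in hs; subst x.
    by apply/mapP; exists b => //; rewrite mem_permutations -(perm_cons m.+1).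
  - by move=> /mapP [b]; rewrite mem_permutations => pb ->; rewrite /= eqxx perm_cons.
by rewrite (permP pe) count_map.
Qed.

Definition tau (i n x : nat) := if x == i then n else if x == n then i else x.

Lemma tauK i n : cancel (tau i n) (tau i n).
Proof.
move=> x; rewrite /tau.
case: (eqVneq x i) => [->|xi]; first by rewrite eqxx; case: eqP.
case: (eqVneq x n) => [->|xn]; first by rewrite eqxx.
by rewrite (negbTE xi) (negbTE xn).
Qed.

Lemma tau_range {i n x} : 1 <= i <= n -> 1 <= x <= n -> 1 <= tau i n x <= n.
Proof.
move=> hi hx; rewrite /tau; case: eqP => _; first lia.
case: eqP => _; lia.
Qed.

Definition conj i n (a : seq nat) := [seq tau i n (nth 0 a (tau i n p).-1) | p <- iota 1 n].

Lemma size_conj i n a : size (conj i n a) = n.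
Proof. by rewrite size_map size_iota. Qed.

Lemma nth_conj i n a t : t < n -> nth 0 (conj i n a) t = tau i n (nth 0 a (tau i n t.+1).-1).
Proof. by move=> tn; rewrite (nth_map 0) ?size_iota // nth_iota. Qed.

Lemma map_nth_iota1 (a : seq nat) n : size a = n -> map (fun p => nth 0 a p.-1) (iota 1 n) = a.
Proof.
move=> sa; apply: (@eq_from_nth _ 0) => [|t]; rewrite size_map size_iota // => tn.
by rewrite (nth_map 0) ?size_iota // nth_iota.
Qed.

Lemma conj_perm {i n a} : 1 <= i <= n -> perm_eq a (iota 1 n) -> perm_eq (conj i n a) (iota 1 n).
Proof.
move=> hi pa.
have sa : size a = n by rewrite (perm_size pa) size_iota.
have pt : perm_eq (map (tau i n) (iota 1 n)) (iota 1 n).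
  apply: perm_self; first exact: iota_uniq.
    by move=> x; rewrite !mem_iota add1n !ltnS => hx; apply: tau_range.
  exact: in2W (can_inj (tauK i n)).
have -> : conj i n a = map (tau i n) (map (fun p => nth 0 a p.-1) (map (tau i n) (iota 1 n))).
  by rewrite /conj; elim: (iota 1 n) => //= x l ->.
have h := perm_map (fun p => nth 0 a p.-1) pt.
rewrite map_nth_iota1 // in h.
have h2 := perm_map (tau i n) (perm_trans h pa).
exact: perm_trans h2 pt.
Qed.

Lemma conjK {i n a} : 1 <= i <= n -> size a = n -> conj i n (conj i n a) = a.
Proof.
move=> hi sa; apply: (@eq_from_nth _ 0) => [|t]; rewrite size_conj ?sa // => tn.
have hq : 1 <= tau i n t.+1 <= n by apply: tau_range => //; lia.
rewrite nth_conj // nth_conj; last by move: hq; set q := tau i n t.+1; case: q => //= q; lia.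
have -> : (tau i n t.+1).-1.+1 = tau i n t.+1.
  by move: hq; case: (tau i n t.+1) => //.
by rewrite tauK /= tauK.
Qed.

Lemma conj_der {i n a} : 1 <= i <= n -> perm_eq a (iota 1 n) -> deranged a -> deranged (conj i n a).
Proof.
move=> hi pa /allP D.
have sa : size a = n by rewrite (perm_size pa) size_iota.
apply/allP => t; rewrite mem_iota size_conj add0n => tn.
rewrite nth_conj //; apply/negP => /eqP E.
have hq : 1 <= tau i n t.+1 <= n by apply: tau_range => //; lia.
have E' : nth 0 a (tau i n t.+1).-1 = tau i n t.+1 by rewrite -[LHS](tauK i n) E.
have := D (tau i n t.+1).-1; rewrite mem_iota sa add0n.
have -> : (tau i n t.+1).-1.+1 = tau i n t.+1 by move: hq; case: (tau i n t.+1).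
rewrite E' eqxx => /(_ _) H.
have : false by apply: H; move: hq; case: (tau i n t.+1) => //= q; lia.
by [].
Qed.

Lemma sym i n : 2 <= i <= n ->
  count (fun s => deranged s && (head 0 s == i)) (arrangements n) =
  count (fun s => deranged s && (head 0 s == n)) (arrangements n).
Proof.
move=> hi; have hi1 : 1 <= i <= n by lia.
rewrite [RHS](@count_bij (conj i n)).
- apply: eq_in_count => a; rewrite /arrangements mem_permutations => pa.
  have sa : size a = n by rewrite (perm_size pa) size_iota.
  congr andb.
    apply/idP/idP => D; last by have := conj_der hi1 (conj_perm hi1 pa) D; rewrite conjK.
    exact: conj_der.
  rewrite -!nth0 nth_conj; last lia.
  have -> : tau i n 1 = 1 by rewrite /tau; case: eqP => [|_]; [lia|case: eqP => //; lia].
  apply/eqP/eqP => [->|E]; first by rewrite /tau eqxx.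
  by rewrite -(tauK i n (nth 0 a 0)) E /tau; case: eqP => [->|_]; rewrite ?eqxx.
- exact: permutations_uniq.
- by move=> a; rewrite /arrangements !mem_permutations => pa; apply: conj_perm.
- move=> x y; rewrite /arrangements !mem_permutations => px py E.
  have sx : size x = n by rewrite (perm_size px) size_iota.
  have sy : size y = n by rewrite (perm_size py) size_iota.
  by rewrite -(conjK hi1 sx) E conjK.
Qed.

Theorem corollary4p6 (n : nat) : 2 <= n ->
  (forall i, 2 <= i <= n ->
     count (fun s => deranged s && (head 0 s == i)) (arrangements n) = d n.-1)
  /\ count (fun s => deranged s && (head 0 s == 1)) (arrangements n) = 0.
Proof.
move=> n2; split.
- move=> i hi; rewrite sym //.
  case: n n2 hi => [//|m] n2 hi.
  rewrite (cons_count m deranged) /d /=.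
  rewrite (@count_bij (G m)).
  + apply: eq_in_count => w; rewrite /arrangements mem_permutations => pw.
    by apply: key => //; lia.
  + exact: permutations_uniq.
  + by move=> w; rewrite /arrangements !mem_permutations => pw; apply: G_perm.
  + exact: G_inj.
- rewrite (@eq_in_count _ _ pred0) ?count_pred0 //.
  move=> s; rewrite /arrangements mem_permutations => ps /=.
  apply/negP => /andP [/allP D /eqP h].
  have := D 0; rewrite mem_iota (perm_size ps) size_iota nth0 h /=.
  move=> /(_ _) H; have : false by apply: H; lia.
  by [].
Qed.
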